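(* Under the LP mechanism (in either its fractional or its randomized interpretation), truthfully reporting the execution times is a weakly dominant strategy for every machine: for every true cost matrix $\mathbf t$, every machine $i$ and every declaration matrix $\hat{\mathbf t}$, $C_i(\mathbf t_i,\hat{\mathbf t}_{-i})\le C_i(\hat{\mathbf t})$.
   Context: Scheduling without payments: $n$ machines, $m$ tasks; machine $i$ has private true times $t_{i,j}\ge0$ and declares $\hat t_{i,j}\ge0$; $\mathbf t_i$ denotes row $i$ and $(\mathbf x_i,\hat{\mathbf t}_{-i})$ the matrix where row $i$ of $\hat{\mathbf t}$ is replaced by $\mathbf x_i$. Machines are bound by their declarations: a machine assigned (a fraction of, or with some probability) task $j$ executes it for time $\max\{\hat t_{i,j},t_{i,j}\}$ (times the fraction). Given a mechanism outputting $\alpha_{i,j}(\hat{\mathbf t})\in[0,1]$ with $\sum_i\alpha_{i,j}=1$ for each $j$ (interpreted either as the fraction of task $j$ given to machine $i$, or as the probability that machine $i$ gets task $j$), the cost of machine $i$ is $C_i(\hat{\mathbf t})=\sum_j\alpha_{i,j}(\hat{\mathbf t})\max\{\hat t_{i,j},t_{i,j}\}$. The LP mechanism, on declarations $\hat{\mathbf t}$, outputs an optimal solution $\alpha(\hat{\mathbf t})$ (selected by some fixed rule among optimal solutions, e.g.\ lexicographically smallest) of the linear program: minimize $\mu$ subject to $\sum_i\alpha_{i,j}=1$ for all $j$, $\mu-\sum_j\alpha_{i,j}\hat t_{i,j}\ge0$ for all $i$, and $\alpha_{i,j}\ge0$ for all $i,j$. The LP fractional mechanism interprets $\alpha$ as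 fractions; the LP randomized mechanism interprets $\alpha$ as allocation probabilities. *)

(* Defs.v *)
From mathcomp Require Import all_boot all_order all_algebra.
Set Implicit Arguments. Unset Strict Implicit. Unset Printing Implicit Defensive.
Import Order.TTheory GRing.Theory Num.Theory.
Local Open Scope ring_scope.

(* Matrices 'M[R]_(n, m): rows = machines, columns = tasks. *)

Definition nonneg_mx (R : realFieldType) (n m : nat) (d : 'M[R]_(n, m)) : Prop :=
  forall i j, 0 <= d i j.

Definition lp_feasible (R : realFieldType) (n m : nat) (d : 'M[R]_(n, m))
    (sol : 'M[R]_(n, m) * R) : Prop :=
  [/\ forall j, \sum_(i < n) sol.1 i j = 1,
      forall i, 0 <= sol.2 - \sum_(j < m) sol.1 i j * d i j
    & forall i j, 0 <= sol.1 i j].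

Definition lp_optimal (R : realFieldType) (n m : nat) (d : 'M[R]_(n, m))
    (sol : 'M[R]_(n, m) * R) : Prop :=
  lp_feasible d sol /\ forall sol', lp_feasible d sol' -> sol.2 <= sol'.2.

Definition LP_mechanism (R : realFieldType) (n m : nat)
    (mech : 'M[R]_(n, m) -> 'M[R]_(n, m) * R) : Prop :=
  forall d, nonneg_mx d -> lp_optimal d (mech d).

(* (x_i, d_{-i}) : row i of d replaced by row i of x *)
Definition replace_row (R : realFieldType) (n m : nat) (i : 'I_n)
    (x d : 'M[R]_(n, m)) : 'M[R]_(n, m) :=
  \matrix_(k, j) (if k == i then x i j else d k j).

(* Cost of machine i with true times t under declarations d:
   C_i(d) = sum_j alpha_ij(d) * max(d_ij, t_ij)  (fraction, or expected cost). *)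
Definition cost (R : realFieldType) (n m : nat)
    (mech : 'M[R]_(n, m) -> 'M[R]_(n, m) * R) (t : 'M[R]_(n, m)) (i : 'I_n)
    (d : 'M[R]_(n, m)) : R :=
  \sum_(j < m) (mech d).1 i j * Num.max (d i j) (t i j).

(* Main.v *)
Require Import Defs.
From mathcomp Require Import all_boot all_order all_algebra.
From mathcomp Require Import ring lra.
Import Order.TTheory GRing.Theory Num.Theory.
Local Open Scope ring_scope.

Lemma tight (R : realFieldType) (n m : nat) (d : 'M[R]_(n, m)) sol (i : 'I_n) :
  nonneg_mx d -> lp_optimal d sol -> sol.2 <= \sum_(j < m) sol.1 i j * d i j.
Proof.
move=> d0 [[Hs Hl Hp] Hopt].
set l := \sum_(j < m) sol.1 i j * d i j.
have l0 : 0 <= l by apply: sumr_ge0 => j _; apply: mulr_ge0.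
rewrite leNgt; apply/negP => ltlm.
have mu0 : 0 < sol.2 by apply: le_lt_trans ltlm.
set S := \sum_(j < m) d i j.
have S0 : 0 <= S by apply: sumr_ge0.
set e := (sol.2 - l) / (S + sol.2).
have Spos : 0 < S + sol.2 by apply: ltr_wpDl.
have e0 : 0 < e by apply: divr_gt0; rewrite // subr_gt0.
have e1 : e <= 1 by rewrite ler_pdivrMr // mul1r; lra.
have eS : e * (S - l) < sol.2 - l.
  rewrite /e mulrAC ltr_pdivrMr // ltr_pM2l ?subr_gt0 //; lra.
set a := \matrix_(k, j) (if k == i then (1 - e) * sol.1 k j + e else (1 - e) * sol.1 k j).
set mu := Num.max ((1 - e) * sol.2) ((1 - e) * l + e * S).
have F : lp_feasible d (a, mu).
  split => /=.
  - move=> j; rewrite (bigD1 i) //= mxE eqxx.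
    under eq_bigr => k /negPf kn do rewrite mxE kn.
    rewrite -mulr_sumr.
    have := Hs j; rewrite (bigD1 i) //= => H1.
    have -> : \sum_(i0 < n | i0 != i) sol.1 i0 j = 1 - sol.1 i j by rewrite -H1; ring.
    ring.
  - move=> k; rewrite subr_ge0.
    under eq_bigr => j _ do rewrite mxE.
    case: (eqVneq k i) => [->|kn].
      under eq_bigr => j _ do rewrite mulrDl -mulrA.
      rewrite big_split /= -mulr_sumr -mulr_sumr.
      by rewrite le_max lexx orbT.
    under eq_bigr => j _ do rewrite -mulrA.
    rewrite -mulr_sumr le_max; apply/orP; left.
    rewrite ler_wpM2l // ?subr_ge0 //. by rewrite -subr_ge0.
  - move=> k j; rewrite mxE; case: ifP => _.
      by apply: addr_ge0; [apply: mulr_ge0; rewrite ?subr_ge0|apply: ltW].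
    by apply: mulr_ge0; rewrite ?subr_ge0.
have := Hopt _ F; rewrite /= /mu le_max => /orP[].
  rewrite -subr_ge0.
  have -> : (1 - e) * sol.2 - sol.2 = - (e * sol.2) by ring.
  by rewrite oppr_ge0 leNgt mulr_gt0.
rewrite -subr_ge0.
have -> : (1 - e) * l + e * S - sol.2 = e * (S - l) - (sol.2 - l) by ring.
by rewrite subr_ge0 leNgt eS.
Qed.

Theorem theorem4 (R : realFieldType) (n m : nat)
    (mech : 'M[R]_(n, m) -> 'M[R]_(n, m) * R) :
  LP_mechanism mech ->
  forall (t th : 'M[R]_(n, m)) (i : 'I_n),
    nonneg_mx t -> nonneg_mx th ->
    cost mech t i (replace_row i t th) <= cost mech t i th.
Proof.
move=> Hm t th i t0 th0.
set d' := replace_row i t th.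
have d'0 : nonneg_mx d' by move=> k j; rewrite mxE; case: ifP.
have [[Hs' Hl' Hp'] Hopt'] := Hm _ d'0.
have Ho := Hm _ th0.
have [[Hs Hl Hp] _] := Ho.
set L := \sum_(j < m) (mech th).1 i j * t i j.
have F : lp_feasible d' ((mech th).1, Num.max (mech th).2 L).
  split => //= k; rewrite subr_ge0.
  under eq_bigr => j _ do rewrite mxE.
  case: (eqVneq k i) => [->|kn].
    by rewrite le_max lexx orbT.
  by rewrite le_max -subr_ge0 Hl.
have h1 := Hopt' _ F.
have h2 : cost mech t i d' <= (mech d').2.
  rewrite /cost -subr_ge0; apply: le_trans (Hl' i) _; rewrite le_eqVlt; apply/orP; left.
  apply/eqP; congr (_ - _); apply: eq_bigr => j _; by rewrite /d' mxE eqxx maxxx.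
apply: le_trans h2 _; rewrite /cost; apply: le_trans h1 _; rewrite ge_max; apply/andP; split.
  apply: le_trans (@tight _ _ _ th _ i th0 Ho) _; apply: ler_sum => j _.
  by apply: ler_wpM2l => //; rewrite le_max lexx.
apply: ler_sum => j _; apply: ler_wpM2l => //; by rewrite le_max lexx orbT.
Qed.
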